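(* Let $\tau>2$ and $h>0$. Let $p>q$ be real numbers and $\alpha_p,\alpha_q$ nonzero complex numbers, and suppose there is a constant $C_\tau>0$ such that for all $a,b\in\mathbb{C}$, $$|a|^2+|b|^2\le C_\tau\int_0^\tau\left[\frac1{h^2}\left|a\alpha_pe^{ipt}+b\alpha_qe^{iqt}\right|^2+\left|a\alpha_p\,p\,e^{ipt}+b\alpha_q\,q\,e^{iqt}\right|^2\right]dt.$$ Then $$|p-q|\ge\sqrt{\frac{\frac1{2C_\tau\tau}\left(\frac1{|\alpha_p|^2}+\frac1{|\alpha_q|^2}\right)}{1+\frac16\tau^2\left(\frac1{h^2}+2(|q|^2+|p|^2)\right)}}.$$ *)

(* Defs.v *)
From Stdlib Require Import Reals.
From Coquelicot Require Import Coquelicot.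
Open Scope R_scope.

Definition cexpi (x : R) : C := (cos x, sin x).

Definition obs_integrand (h p q : R) (alp alq a b : C) (t : R) : R :=
  / h ^ 2 * (Cmod (a * alp * cexpi (p * t) + b * alq * cexpi (q * t))%C) ^ 2
  + (Cmod (a * alp * RtoC p * cexpi (p * t) + b * alq * RtoC q * cexpi (q * t))%C) ^ 2.

(* Main.v *)
Require Import Defs.
From Stdlib Require Import Reals Lra Lia.
From Coquelicot Require Import Coquelicot.
Open Scope R_scope.

Lemma sin_sq_le (x : R) : sin x ^ 2 <= x ^ 2.
Proof.
pose proof (SIN_bound x). pose proof PI2_3_2.
destruct (Rle_lt_dec 1 (x^2)). { nra. }
destruct (Rtotal_order x 0) as [Hx|[Hx|Hx]].
- pose proof (sin_gt_x x Hx). pose proof (sin_lt_0_var x ltac:(nra) Hx). nra.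
- subst. rewrite sin_0. lra.
- pose proof (sin_lt_x x Hx). pose proof (sin_gt_0 x Hx ltac:(nra)). nra.
Qed.

Lemma one_minus_cos (u : R) : 2 - 2 * cos u <= u ^ 2.
Proof.
replace u with (2 * (u / 2)) at 1 by field. rewrite cos_2a_sin.
pose proof (sin_sq_le (u/2)). unfold Rsqr. nra.
Qed.

Definition g0 (h p q : R) (t : R) : R :=
  / h ^ 2 * (2 - 2 * (cos (p * t) * cos (q * t) + sin (p * t) * sin (q * t)))
  + (p ^ 2 + q ^ 2 - 2 * p * q * (cos (p * t) * cos (q * t) + sin (p * t) * sin (q * t))).

Lemma integrand_eq (h p q : R) (alp alq : C) (t : R) : alp <> 0%C -> alq <> 0%C ->
  obs_integrand h p q alp alq (/ alp)%C (- / alq)%C t = g0 h p q t.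
Proof.
intros Hp Hq. unfold obs_integrand, g0.
assert (E1 : (/ alp * alp = 1)%C) by exact (Cinv_l alp Hp).
assert (E2 : (- / alq * alq = - 1)%C).
{ assert (X : (- / alq * alq = - (/ alq * alq))%C).
  { destruct (/ alq)%C as [u v], alq as [w z]. unfold Cmult, Copp. simpl. f_equal; ring. }
  rewrite X, (Cinv_l alq Hq). apply injective_projections; simpl; ring. }
rewrite E1, E2. unfold Cmod, cexpi. assert (A : sin (p*t)^2 + cos (p*t)^2 = 1) by (rewrite <- !Rsqr_pow2; apply sin2_cos2).
assert (B : sin (q*t)^2 + cos (q*t)^2 = 1) by (rewrite <- !Rsqr_pow2; apply sin2_cos2).
rewrite !pow2_sqrt.
2,3: simpl; rewrite !Rmult_1_r; apply Rplus_le_le_0_compat; apply Rle_0_sqr.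
set (cp := cos (p*t)) in *. set (sp := sin (p*t)) in *. set (cq := cos (q*t)) in *. set (sq := sin (q*t)) in *.
simpl.
transitivity (/h^2*((sp^2+cp^2)+(sq^2+cq^2) - 2*(cp*cq+sp*sq)) + (p^2*(sp^2+cp^2) + q^2*(sq^2+cq^2) - 2*p*q*(cp*cq+sp*sq))).
- simpl. ring.
- rewrite A, B. simpl. ring.
Qed.
Lemma g0_le (h p q t : R) : h > 0 ->
  g0 h p q t <= ((p-q)^2 / h^2 + (p^2+q^2)/2*(p-q)^2) * t^2 + (p-q)^2.
Proof.
intros Hh. unfold g0.
rewrite <- cos_minus.
pose proof (one_minus_cos (p*t - q*t)) as H1.
pose proof (COS_bound (p*t - q*t)) as H2.
set (X := 2 - 2 * cos (p*t - q*t)) in *.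
assert (HX : 0 <= X) by (unfold X; lra).
assert (HY : (p*t - q*t)^2 = (p-q)^2 * t^2) by ring.
rewrite HY in H1.
assert (Hi : 0 < / h^2) by (apply Rinv_0_lt_compat; nra).
assert (E : p ^ 2 + q ^ 2 - 2 * p * q * cos (p * t - q * t) = (p-q)^2 + p*q*X) by (unfold X; ring).
rewrite E.
assert (Q1 : / h^2 * X <= / h^2 * ((p-q)^2 * t^2)) by (apply Rmult_le_compat_l; lra).
assert (Q2 : p*q*X <= (p^2+q^2)/2 * X). { assert (0 <= (p-q)^2 * X) by (apply Rmult_le_pos; [apply pow2_ge_0 | exact HX]). assert (Z : (p^2+q^2)/2*X - p*q*X = (p-q)^2*X/2) by field. lra. }
assert (Q3 : (p^2+q^2)/2 * X <= (p^2+q^2)/2 * ((p-q)^2 * t^2)) by (apply Rmult_le_compat_l; nra).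
unfold Rdiv in *. lra.
Qed.

Lemma minusR (x y : R) : minus x y = x - y.
Proof. reflexivity. Qed.

Theorem lemma5 (tau h p q : R) (alp alq : C) (Ctau : R) :
  tau > 2 -> h > 0 -> p > q -> alp <> 0%C -> alq <> 0%C -> Ctau > 0 ->
  (forall a b : C,
     (Cmod a) ^ 2 + (Cmod b) ^ 2
       <= Ctau * RInt (obs_integrand h p q alp alq a b) 0 tau) ->
  Rabs (p - q) >=
    sqrt ((/ (2 * Ctau * tau) * (/ (Cmod alp) ^ 2 + / (Cmod alq) ^ 2))
          / (1 + / 6 * tau ^ 2 * (/ h ^ 2 + 2 * ((Rabs q) ^ 2 + (Rabs p) ^ 2)))).
Proof.
intros Ht Hh Hpq Hp Hq HC Hobs.
specialize (Hobs (/ alp)%C (- / alq)%C).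
rewrite Cmod_opp, !Cmod_inv in Hobs by assumption.
rewrite (RInt_ext _ (g0 h p q)) in Hobs by (intros; apply integrand_eq; assumption).
set (d := p - q).
set (A := (d^2 / h^2 + (p^2+q^2)/2*d^2)).
assert (Hle : RInt (g0 h p q) 0 tau <= RInt (fun t => A * t^2 + d^2) 0 tau).
{ apply RInt_le.
  - lra.
  - apply (ex_RInt_continuous (V:=R_CompleteNormedModule)). intros z _. apply (ex_derive_continuous (K:=R_AbsRing) (V:=R_NormedModule)). unfold g0. auto_derive. auto.
  - apply (ex_RInt_continuous (V:=R_CompleteNormedModule)). intros z _. apply (ex_derive_continuous (K:=R_AbsRing) (V:=R_NormedModule)). auto_derive. auto.
  - intros x _. apply g0_le. assumption. }
assert (Hval : RInt (fun t => A * t^2 + d^2) 0 tau = A * tau^3 / 3 + d^2 * tau).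
{ apply is_RInt_unique.
  assert (Hd := is_RInt_derive (fun t => A * t^3 / 3 + d^2 * t) (fun t => A * t^2 + d^2) 0 tau).
  replace (A * tau^3 / 3 + d^2 * tau) with (minus (A * tau^3 / 3 + d^2 * tau) (A * 0^3 / 3 + d^2 * 0)).
  - apply Hd.
    + intros x _. auto_derive. auto. field.
    + intros x _. apply (ex_derive_continuous (K:=R_AbsRing) (V:=R_NormedModule)). auto_derive. auto.
  - unfold minus, plus, opp. simpl. change (@eq R (A * tau ^ 3 / 3 + d ^ 2 * tau + - (A * 0 ^ 3 / 3 + d ^ 2 * 0)) (A * tau ^ 3 / 3 + d ^ 2 * tau)). rewrite pow_i by lia. field. }
rewrite Hval in Hle.
rewrite !pow_inv in Hobs.
set (S := / Cmod alp ^ 2 + / Cmod alq ^ 2) in *.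
rewrite !pow2_abs.
set (D := 1 + / 6 * tau ^ 2 * (/ h ^ 2 + 2 * (q ^ 2 + p ^ 2))).
assert (Hih : 0 < / h^2) by (apply Rinv_0_lt_compat; nra).
assert (Hp2 : 0 <= p^2) by apply pow2_ge_0.
assert (Hq2 : 0 <= q^2) by apply pow2_ge_0.
assert (Hd2 : 0 <= d^2) by apply pow2_ge_0.
assert (Ht2 : 0 <= tau^2) by apply pow2_ge_0.
assert (HD : 0 < D).
{ unfold D. assert (0 <= / 6 * tau ^ 2 * (/ h ^ 2 + 2 * (q ^ 2 + p ^ 2))).
  { apply Rmult_le_pos. apply Rmult_le_pos; lra. lra. } lra. }
assert (Hbound : A * tau^3 / 3 + d^2 * tau <= 2 * tau * d^2 * D).
{ assert (Z : 2 * tau * d^2 * D - (A * tau^3 / 3 + d^2 * tau) = tau * d^2 + / 2 * (tau * tau^2) * d^2 * (p^2+q^2)).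
  { unfold D, A. field. lra. }
  assert (0 <= tau * d^2) by (apply Rmult_le_pos; lra).
  assert (0 <= / 2 * (tau * tau^2) * d^2 * (p^2+q^2)).
  { apply Rmult_le_pos; [|lra]. apply Rmult_le_pos; [|lra]. apply Rmult_le_pos; [lra|]. apply Rmult_le_pos; lra. }
  lra. }
assert (Key : S <= Ctau * (2 * tau * d^2 * D)).
{ apply Rle_trans with (1 := Hobs). apply Rmult_le_compat_l; lra. }
apply Rle_ge. rewrite <- (sqrt_Rsqr_abs d). apply sqrt_le_1_alt.
rewrite Rsqr_pow2.
apply Rle_trans with (d^2 * D / D); [| right; field; lra].
unfold Rdiv. apply Rmult_le_compat_r. { left; apply Rinv_0_lt_compat; lra. }
apply Rle_trans with (/ (2 * Ctau * tau) * (Ctau * (2 * tau * d ^ 2 * D))).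
- apply Rmult_le_compat_l; [left; apply Rinv_0_lt_compat; nra | exact Key].
- right. field. lra.
Qed.
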